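(* Let $(A,\leq,\cdot,/)$ be a right-residuated magma satisfying condition (N). For $a\in A$ let $(a]=\{x\in A\mid x\leq a\}$. Then: (1) each $(a]$ is closed under $\sqcap$; (2) the following are equivalent: (a) $A$ is a narhoop; (b) for every $a\in A$, $\sqcap$ is commutative on $(a]$; (c) for every $a\in A$, $\sqcap$ is associative on $(a]$.
   Context: Write $xy$ for $x\cdot y$; $\cdot$ binds more strongly than $/$, and $/$ binds more strongly than $\sqcap$, where $x\sqcap y := (x/y)y$. A right-residuated magma is a structure $(A,\leq,\cdot,/)$ where $(A,\leq)$ is a poset and $xy\leq z\iff x\leq z/y$ for all $x,y,z\in A$. Condition (N): for all $x,y\in A$, $x\leq y\iff x = y\sqcap x$. A narhoop is a right-residuated magma such that for all $x,y$: $x\leq y\iff x\sqcap y = x = y\sqcap x$; equivalently, a right-residuated magma satisfying (N) and the identity $(x\sqcap y)\sqcap x = x\sqcap y$. *)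

(* Defs.v *)
Record right_residuated_magma {A : Type} (le : A -> A -> Prop)
    (mul : A -> A -> A) (rdiv : A -> A -> A) : Prop := {
  rrm_refl  : forall x, le x x;
  rrm_antisym : forall x y, le x y -> le y x -> x = y;
  rrm_trans : forall x y z, le x y -> le y z -> le x z;
  rrm_resid : forall x y z, le (mul x y) z <-> le x (rdiv z y)
}.

Definition sqcap {A : Type} (mul rdiv : A -> A -> A) (x y : A) : A :=
  mul (rdiv x y) y.

Definition condN {A : Type} (le : A -> A -> Prop) (mul rdiv : A -> A -> A) : Prop :=
  forall x y, le x y <-> x = sqcap mul rdiv y x.

Definition narhoop {A : Type} (le : A -> A -> Prop) (mul rdiv : A -> A -> A) : Prop :=
  right_residuated_magma le mul rdiv /\
  (forall x y, le x y <-> (sqcap mul rdiv x y = x /\ x = sqcap mul rdiv y x)).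

Definition downset {A : Type} (le : A -> A -> Prop) (a : A) : A -> Prop :=
  fun x => le x a.

(* Main.v *)
Require Import Defs.

Section S.
Context (A : Type) (le : A -> A -> Prop) (mul rdiv : A -> A -> A)
  (HA : right_residuated_magma le mul rdiv) (HN : condN le mul rdiv).
Local Notation sq := (sqcap mul rdiv).

Lemma F1 x y : le (sq x y) x.
Proof. apply (rrm_resid _ _ _ HA). apply (rrm_refl _ _ _ HA). Qed.

Lemma divmon z z' y : le z z' -> le (rdiv z y) (rdiv z' y).
Proof. intros H. apply (rrm_resid _ _ _ HA). eapply (rrm_trans _ _ _ HA); [apply F1|exact H]. Qed.

Lemma mulmon x x' y : le x x' -> le (mul x y) (mul x' y).
Proof. intros H. apply (rrm_resid _ _ _ HA).
  eapply (rrm_trans _ _ _ HA); [exact H|]. apply (rrm_resid _ _ _ HA), (rrm_refl _ _ _ HA). Qed.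

Lemma Nle x y : le x y -> sq y x = x.
Proof. intros H. symmetry. apply HN, H. Qed.

Lemma sq_le_y a x y : le x a -> le y a -> le (sq x y) y.
Proof. intros Hx Hy. eapply (rrm_trans _ _ _ HA); [apply mulmon, divmon, Hx|].
  change (le (sq a y) y). rewrite (Nle _ _ Hy). apply (rrm_refl _ _ _ HA). Qed.

Lemma narhoop_char : narhoop le mul rdiv <-> (forall x y, le x y -> sq x y = x).
Proof. split.
  - intros [_ H] x y Hxy. apply H, Hxy.
  - intros H. split; [exact HA|]. intros x y; split.
    + intros Hxy. split; [apply H, Hxy| apply HN, Hxy].
    + intros [_ E]. apply HN, E.
Qed.

Lemma glb (Hn : forall x y, le x y -> sq x y = x) w x y :
  le w x -> le w y -> le w (sq x y).
Proof. intros Hx Hy. rewrite <- (Hn _ _ Hy). apply mulmon, divmon, Hx. Qed.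

Lemma comm (Hn : forall x y, le x y -> sq x y = x) a x y :
  le x a -> le y a -> sq x y = sq y x.
Proof. intros Hx Hy. apply (rrm_antisym _ _ _ HA).
  - apply glb; auto. eapply sq_le_y; eauto. apply F1.
  - apply glb; auto. eapply sq_le_y; eauto. apply F1.
Qed.

End S.

Theorem mainTheorem5 (A : Type) (le : A -> A -> Prop) (mul rdiv : A -> A -> A)
  (HA : right_residuated_magma le mul rdiv) (HN : condN le mul rdiv) :
  (* (1) each (a] is closed under ⊓ *)
  (forall a x y, downset le a x -> downset le a y ->
     downset le a (sqcap mul rdiv x y)) /\
  (* (2) (a) <-> (b) and (a) <-> (c) *)
  ((narhoop le mul rdiv <->
      (forall a x y, downset le a x -> downset le a y ->
         sqcap mul rdiv x y = sqcap mul rdiv y x)) /\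
   (narhoop le mul rdiv <->
      (forall a x y z, downset le a x -> downset le a y -> downset le a z ->
         sqcap mul rdiv (sqcap mul rdiv x y) z =
         sqcap mul rdiv x (sqcap mul rdiv y z)))).
Proof.
  unfold downset.
  pose proof (rrm_trans _ _ _ HA) as Tr.
  pose proof (rrm_antisym _ _ _ HA) as As.
  pose proof (rrm_refl _ _ _ HA) as Rf.
  pose proof (narhoop_char _ _ _ _ HA HN) as NC.
  split; [|split].
  - intros a x y Hx Hy. eapply Tr; [apply (F1 A le mul rdiv HA)|exact Hx].
  - split.
    + intros Hn0 a x y Hx Hy. pose proof (proj1 NC Hn0) as Hn. eapply (comm A le mul rdiv HA HN Hn); eauto.
    + intros Hc. apply NC. intros x y Hxy. rewrite (Hc y x y Hxy (Rf y)). apply (Nle A le mul rdiv HN); auto.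
  - split.
    + intros Hn0 a x y z Hx Hy Hz. pose proof (proj1 NC Hn0) as Hn.
      assert (M : forall p q, le p a -> le q a ->
        le (sqcap mul rdiv p q) p /\ le (sqcap mul rdiv p q) q /\ le (sqcap mul rdiv p q) a).
      { intros p q Hp Hq. split; [apply (F1 A le mul rdiv HA)|split].
        - eapply (sq_le_y A le mul rdiv HA HN); eauto.
        - eapply Tr; [apply (F1 A le mul rdiv HA)|exact Hp]. }
      destruct (M x y Hx Hy) as [m1 [m2 m3]].
      destruct (M y z Hy Hz) as [n1 [n2 n3]].
      destruct (M _ z m3 Hz) as [p1 [p2 p3]].
      destruct (M x _ Hx n3) as [q1 [q2 q3]].
      apply As.
      * apply (glb A le mul rdiv HA Hn); [eapply Tr; [exact p1|exact m1]|].
        apply (glb A le mul rdiv HA Hn); [eapply Tr; [exact p1|exact m2]|exact p2].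
      * apply (glb A le mul rdiv HA Hn); [|eapply Tr; [exact q2|exact n2]].
        apply (glb A le mul rdiv HA Hn); [exact q1|eapply Tr; [exact q2|exact n1]].
    + intros Hc. apply NC. intros x y Hxy. apply As.
      * apply (F1 A le mul rdiv HA).
      * pose proof (Hc y x y x Hxy (Rf y) Hxy) as E.
        rewrite (Nle _ _ _ _ HN _ _ Hxy) in E.
        rewrite (Nle _ _ _ _ HN _ _ (Rf x)) in E.
        pattern x at 1; rewrite <- E. apply (F1 A le mul rdiv HA).
Qed.
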